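(* Let $\{X,F\}$ be a compatible pair of skew invertible operators $X,F\in\mathrm{End}(V\otimes V)$, with $F$ invertible. Then $$C_{X,1}\Psi_{F,12}=F_{21}^{-1}C_{X,2},\quad \Psi_{F,12}C_{X,1}=C_{X,2}F_{21}^{-1},\quad \Psi_{F,12}D_{X,2}=D_{X,1}F_{21}^{-1},\quad D_{X,2}\Psi_{F,12}=F_{21}^{-1}D_{X,1}.$$
   Context: $V$ is a complex vector space of dimension $N$ with a fixed basis. For $X\in\mathrm{End}(V\otimes V)$ and $m<r$, $X_{mr}$ denotes the operator on $V^{\otimes n}$ acting as $X$ on tensor factors $m,r$ and as the identity elsewhere, $X_{rm}:=P_{mr}X_{mr}P_{mr}$, $X_m:=X_{m,m+1}$; for $Y\in\mathrm{End}(V)$, $Y_m$ acts as $Y$ on factor $m$. $P$ is the flip $u\otimes v\mapsto v\otimes u$; $\mathrm{Tr}_{(i)}$ is partial trace over factor $i$. $X$ is skew invertible if there is $\Psi_X\in\mathrm{End}(V\otimes V)$ with $\mathrm{Tr}_{(2)}X_{12}\Psi_{X,23}=\mathrm{Tr}_{(2)}\Psi_{X,12}X_{23}=P_{13}$; then $C_X:=\mathrm{Tr}_{(1)}\Psi_{X,12}$, $D_X:=\mathrm{Tr}_{(2)}\Psi_{X,12}$. A pair $\{X,F\}$ is compatible if $X_1F_2F_1=F_2F_1X_2$ and $X_2F_1F_2=F_1F_2X_1$. *)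

(* Defs.v *)
(* Operators on tensor powers of V = R^N (fixed basis e_0..e_{N-1})
   are represented by their matrix entries with respect to the product basis:
     Y : op1  :  Y a b            = <e_a | Y | e_b>
     X : op2  :  X a1 a2 b1 b2    = <e_a1 (x) e_a2 | X | e_b1 (x) e_b2>
     Z : op3  :  Z a1 a2 a3 b1 b2 b3  likewise on V^{(x)3}.  *)
From HB Require Import structures.
From mathcomp Require Import all_boot all_order all_algebra.
Set Implicit Arguments. Unset Strict Implicit. Unset Printing Implicit Defensive.
Import GRing.Theory.
Local Open Scope ring_scope.

Section Tensor.
Variables (R : fieldType) (N : nat).
Local Notation I := 'I_N.

Definition op1 := I -> I -> R.
Definition op2 := I -> I -> I -> I -> R.
Definition op3 := I -> I -> I -> I -> I -> I -> R.

Definition dlt (i j : I) : R := (i == j)%:R.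

Definition eqop2 (A B : op2) : Prop := forall a1 a2 b1 b2, A a1 a2 b1 b2 = B a1 a2 b1 b2.
Definition eqop3 (A B : op3) : Prop :=
  forall a1 a2 a3 b1 b2 b3, A a1 a2 a3 b1 b2 b3 = B a1 a2 a3 b1 b2 b3.

Definition mul2 (A B : op2) : op2 := fun a1 a2 c1 c2 =>
  \sum_(b1 < N) \sum_(b2 < N) A a1 a2 b1 b2 * B b1 b2 c1 c2.
Definition mul3 (A B : op3) : op3 := fun a1 a2 a3 c1 c2 c3 =>
  \sum_(b1 < N) \sum_(b2 < N) \sum_(b3 < N)
     A a1 a2 a3 b1 b2 b3 * B b1 b2 b3 c1 c2 c3.

Definition id2 : op2 := fun a1 a2 b1 b2 => dlt a1 b1 * dlt a2 b2.
Definition flip2 : op2 := fun a1 a2 b1 b2 => dlt a1 b2 * dlt a2 b1.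

Definition op21 (X : op2) : op2 := mul2 (mul2 flip2 X) flip2.

Definition lift1 (Y : op1) : op2 := fun a1 a2 b1 b2 => Y a1 b1 * dlt a2 b2.
Definition lift2 (Y : op1) : op2 := fun a1 a2 b1 b2 => dlt a1 b1 * Y a2 b2.

Definition lift12 (X : op2) : op3 := fun a1 a2 a3 b1 b2 b3 =>
  X a1 a2 b1 b2 * dlt a3 b3.
Definition lift23 (X : op2) : op3 := fun a1 a2 a3 b1 b2 b3 =>
  dlt a1 b1 * X a2 a3 b2 b3.

(* partial trace over the 2nd factor of V^{(x)3}: an operator on factors 1,3 *)
Definition ptr2_3 (Z : op3) : op2 := fun a1 a3 b1 b3 =>
  \sum_(b < N) Z a1 b a3 b1 b b3.
Definition ptr1 (X : op2) : op1 := fun a b => \sum_(c < N) X c a c b.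
Definition ptr2 (X : op2) : op1 := fun a b => \sum_(c < N) X a c b c.

(* Psi is a skew inverse of X (P_13, as an operator on factors 1,3, is the flip) *)
Definition skew_inverse (X Psi : op2) : Prop :=
  eqop2 (ptr2_3 (mul3 (lift12 X) (lift23 Psi))) flip2 /\
  eqop2 (ptr2_3 (mul3 (lift12 Psi) (lift23 X))) flip2.

Definition C_of (Psi : op2) : op1 := ptr1 Psi.
Definition D_of (Psi : op2) : op1 := ptr2 Psi.

Definition compatible (X F : op2) : Prop :=
  eqop3 (mul3 (mul3 (lift12 X) (lift23 F)) (lift12 F))
        (mul3 (mul3 (lift23 F) (lift12 F)) (lift23 X)) /\
  eqop3 (mul3 (mul3 (lift23 X) (lift12 F)) (lift23 F))
        (mul3 (mul3 (lift12 F) (lift23 F)) (lift12 X)).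

Definition inverse2 (F Finv : op2) : Prop :=
  eqop2 (mul2 F Finv) id2 /\ eqop2 (mul2 Finv F) id2.

End Tensor.

(* Main.v *)
Require Import Defs.
From mathcomp Require Import all_boot all_order all_algebra.
From mathcomp Require Import ring.
From Stdlib Require Import FunctionalExtensionality Setoid Morphisms.
Require Import Defs.
Set Implicit Arguments. Unset Strict Implicit. Unset Printing Implicit Defensive.
Import GRing.Theory.
Local Open Scope ring_scope.

#[export] Instance bigop_proper (R I : Type) :
  Proper (eq ==> eq ==> pointwise_relation I eq ==> eq) (@bigop.body R I).
Proof. move=> a b -> r s -> F G H; congr bigop.body; exact: functional_extensionality. Qed.

Ltac sw0 := rewrite exchange_big /=.
Ltac sw1 := under eq_bigr => ? _ do rewrite exchange_big /=.
Ltac sw2 := under eq_bigr => ? _ do (under eq_bigr => ? _ do rewrite exchange_big /=).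
Ltac sw3 := under eq_bigr => ? _ do (under eq_bigr => ? _ do (under eq_bigr => ? _ do rewrite exchange_big /=)).
Ltac rg := rewrite /=; ring.
Ltac pull := repeat (setoid_rewrite big_distrl || setoid_rewrite big_distrr).

Section S.
Variables (R : fieldType) (N : nat).
Local Notation I := 'I_N.
Local Notation dl := (dlt R).

Lemma dltxx (a : I) : dl a a = 1. Proof. by rewrite /dlt eqxx. Qed.
Lemma dltC (a b : I) : dl a b = dl b a. Proof. by rewrite /dlt eq_sym. Qed.
Lemma dlt_ne (a b : I) : a != b -> dl a b = 0. Proof. by rewrite /dlt => /negbTE ->. Qed.
Lemma sum1E (F : I -> R) a : (forall i, i != a -> F i = 0) -> \sum_i F i = F a.
Proof. move=> H; rewrite (bigD1 a) //= big1 ?addr0 // => i; exact: H. Qed.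
Arguments sum1E {F} a.

Lemma sum5 (f : I -> I -> I -> I -> I -> R) :
  \sum_a \sum_b \sum_c \sum_d \sum_e f a b c d e = \sum_b \sum_a \sum_c \sum_d \sum_e f a b c d e.
Proof. sw0. done. Qed.
Lemma sum5' (f : I -> I -> I -> I -> I -> R) :
  \sum_a \sum_b \sum_c \sum_d \sum_e f a b c d e = \sum_a \sum_b \sum_c \sum_e \sum_d f a b c d e.
Proof. sw3. done. Qed.
Lemma tpull (f : I -> I -> R) (g : I -> R) c :
  \sum_a (\sum_b f a b) * (c * \sum_d g d) = \sum_a \sum_b \sum_d f a b * (c * g d).
Proof. pull. by []. Qed.
Local Notation op2 := (op2 R N).
Local Notation op3 := (op3 R N).

Lemma E12l (A : op2) (Z : op3) a1 a2 a3 c1 c2 c3 :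
  mul3 (lift12 A) Z a1 a2 a3 c1 c2 c3 = \sum_b1 \sum_b2 A a1 a2 b1 b2 * Z b1 b2 a3 c1 c2 c3.
Proof.
rewrite /mul3 /lift12; apply eq_bigr=> b1 _; apply eq_bigr => b2 _.
rewrite (sum1E a3) ?dltxx ?mulr1 // => b3 h; by rewrite dlt_ne 1?eq_sym // mulr0 mul0r.
Qed.
Lemma E23l (A : op2) (Z : op3) a1 a2 a3 c1 c2 c3 :
  mul3 (lift23 A) Z a1 a2 a3 c1 c2 c3 = \sum_b2 \sum_b3 A a2 a3 b2 b3 * Z a1 b2 b3 c1 c2 c3.
Proof.
rewrite /mul3 /lift23 (sum1E a1) => [|b1 h].
  by apply eq_bigr=> b2 _; apply eq_bigr => b3 _; rewrite dltxx mul1r.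
by rewrite dlt_ne 1?eq_sym //; apply: big1 => b2 _; apply: big1 => b3 _; rewrite !mul0r.
Qed.
Lemma E12r (Z : op3) (A : op2) a1 a2 a3 c1 c2 c3 :
  mul3 Z (lift12 A) a1 a2 a3 c1 c2 c3 = \sum_b1 \sum_b2 Z a1 a2 a3 b1 b2 c3 * A b1 b2 c1 c2.
Proof.
rewrite /mul3 /lift12; apply eq_bigr=> b1 _; apply eq_bigr => b2 _.
rewrite (sum1E c3) ?dltxx ?mulr1 // => b3 h; by rewrite dlt_ne // !mulr0.
Qed.
Lemma E23r (Z : op3) (A : op2) a1 a2 a3 c1 c2 c3 :
  mul3 Z (lift23 A) a1 a2 a3 c1 c2 c3 = \sum_b2 \sum_b3 Z a1 a2 a3 c1 b2 b3 * A b2 b3 c2 c3.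
Proof.
rewrite /mul3 /lift23 (sum1E c1) => [|b1 h].
  by apply eq_bigr=> b2 _; apply eq_bigr => b3 _; rewrite dltxx mul1r.
by apply: big1 => b2 _; apply: big1 => b3 _; rewrite dlt_ne // mul0r mulr0.
Qed.
Lemma E1223 (A B : op2) a1 a2 a3 c1 c2 c3 :
  mul3 (lift12 A) (lift23 B) a1 a2 a3 c1 c2 c3 = \sum_b A a1 a2 c1 b * B b a3 c2 c3.
Proof.
rewrite E12l /lift23 (sum1E c1) => [|b1 h].
  by apply eq_bigr=> b2 _; rewrite dltxx mul1r.
by apply: big1 => b2 _; rewrite dlt_ne // mul0r mulr0.
Qed.
Lemma E2312 (A B : op2) a1 a2 a3 c1 c2 c3 :
  mul3 (lift23 A) (lift12 B) a1 a2 a3 c1 c2 c3 = \sum_b A a2 a3 b c3 * B a1 b c1 c2.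
Proof.
rewrite E23l /lift12; apply eq_bigr => b2 _.
rewrite (sum1E c3) ?dltxx ?mulr1 // => b3 h; by rewrite dlt_ne // !mulr0.
Qed.

Lemma sum3E (f : I -> I -> I -> R) :
  \sum_b1 \sum_b2 \sum_b3 f b1 b2 b3 = \sum_(p : I * I * I) f p.1.1 p.1.2 p.2.
Proof. by rewrite pair_big /= pair_big. Qed.

Lemma sum33 (G : I -> I -> I -> I -> I -> I -> R) :
  \sum_b1 \sum_b2 \sum_b3 \sum_d1 \sum_d2 \sum_d3 G b1 b2 b3 d1 d2 d3 =
  \sum_d1 \sum_d2 \sum_d3 \sum_b1 \sum_b2 \sum_b3 G b1 b2 b3 d1 d2 d3.
Proof.
rewrite sum3E; under eq_bigr do rewrite sum3E.
rewrite exchange_big /= sum3E; apply eq_bigr => p _; by rewrite sum3E.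
Qed.

Lemma mul3A (A B C : op3) : mul3 (mul3 A B) C = mul3 A (mul3 B C).
Proof.
do 6 apply functional_extensionality => ?.
rewrite /mul3. pull. rewrite sum33.
do 6 (apply eq_bigr => ? _); by rewrite /= mulrA.
Qed.

Definition id3 : op3 := lift12 (@id2 R N).
Lemma lift23_id : lift23 (@id2 R N) = id3.
Proof. do 6 apply functional_extensionality => ?. by rewrite /lift23 /id3 /lift12 /id2 /= mulrA. Qed.
Lemma mul3_1l (Z : op3) : mul3 id3 Z = Z.
Proof.
apply functional_extensionality => x; apply functional_extensionality => x0; do 4 apply functional_extensionality => ?. rewrite E12l /id2.
rewrite (sum1E x) => [|b h]; last first. apply: big1 => b2 _. by rewrite dlt_ne 1?eq_sym // !mul0r.
rewrite (sum1E x0) => [|b h]; last by rewrite (@dlt_ne _ b) 1?eq_sym // mulr0 mul0r.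
by rewrite !dltxx !mul1r.
Qed.
Lemma mul3_1r (Z : op3) : mul3 Z id3 = Z.
Proof.
do 3 apply functional_extensionality => ?; apply functional_extensionality => x2; apply functional_extensionality => x3; apply functional_extensionality => ?. rewrite E12r /id2.
rewrite (sum1E x2) => [|b h]; last by apply: big1 => b2 _; rewrite (@dlt_ne b) // !mul0r mulr0.
rewrite (sum1E x3) => [|b h]; last by rewrite (@dlt_ne b) // !mulr0.
by rewrite !dltxx !mulr1.
Qed.
Lemma lift12M (A B : op2) : mul3 (lift12 A) (lift12 B) = lift12 (mul2 A B).
Proof.
do 6 apply functional_extensionality => ?. rewrite E12l /lift12 /mul2 big_distrl.
apply eq_bigr => ? _; rewrite big_distrl; apply eq_bigr => ? _; by rewrite mulrA.
Qed.
Lemma lift23M (A B : op2) : mul3 (lift23 A) (lift23 B) = lift23 (mul2 A B).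
Proof.
do 6 apply functional_extensionality => ?. rewrite E23l /lift23 /mul2 big_distrr.
apply eq_bigr => ? _; rewrite big_distrr; apply eq_bigr => ? _; by rewrite mulrCA.
Qed.

Lemma conj1 (x1 x2 f1 f2 g1 g2 : op3) : mul3 f1 g1 = id3 -> mul3 g2 f2 = id3 ->
  mul3 (mul3 x1 f2) f1 = mul3 (mul3 f2 f1) x2 ->
  mul3 (mul3 f1 x2) g1 = mul3 (mul3 g2 x1) f2.
Proof.
move=> e1 e2 c.
rewrite -[RHS]mul3_1r -e1.
have -> : mul3 (mul3 (mul3 g2 x1) f2) (mul3 f1 g1) = mul3 (mul3 g2 (mul3 (mul3 x1 f2) f1)) g1 by rewrite !mul3A.
rewrite c.
have -> : mul3 (mul3 g2 (mul3 (mul3 f2 f1) x2)) g1 = mul3 (mul3 g2 f2) (mul3 (mul3 f1 x2) g1) by rewrite !mul3A.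
by rewrite e2 mul3_1l.
Qed.
Lemma conj2 (x1 x2 f1 f2 g1 g2 : op3) : mul3 g1 f1 = id3 -> mul3 f2 g2 = id3 ->
  mul3 (mul3 x2 f1) f2 = mul3 (mul3 f1 f2) x1 ->
  mul3 (mul3 g1 x2) f1 = mul3 (mul3 f2 x1) g2.
Proof.
move=> e1 e2 c.
rewrite -[LHS]mul3_1r -e2.
have -> : mul3 (mul3 (mul3 g1 x2) f1) (mul3 f2 g2) = mul3 (mul3 g1 (mul3 (mul3 x2 f1) f2)) g2 by rewrite !mul3A.
rewrite c.
have -> : mul3 (mul3 g1 (mul3 (mul3 f1 f2) x1)) g2 = mul3 (mul3 g1 f1) (mul3 (mul3 f2 x1) g2) by rewrite !mul3A.
by rewrite e1 mul3_1l.
Qed.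

Section G.
Variables (X PsiX : op2).
Hypothesis S1X : forall i k j l, \sum_b \sum_c X i b j c * PsiX c k b l = dl i l * dl k j.
Hypothesis S2X : forall i k j l, \sum_b \sum_c PsiX i b j c * X c k b l = dl i l * dl k j.

Let C := C_of PsiX.
Let D := D_of PsiX.

Lemma CXl k l : \sum_b \sum_c C b c * X c k b l = dl k l.
Proof.
rewrite /C /C_of /ptr1. pull. sw1. sw0.
under eq_bigr => i _ do rewrite S2X.
rewrite (sum1E l) ?dltxx ?mul1r // => i h; by rewrite dlt_ne // mul0r.
Qed.
Lemma DXl i j : \sum_b \sum_c X i b j c * D c b = dl i j.
Proof.
rewrite /D /D_of /ptr2. pull. sw1. sw0.
under eq_bigr => k _ do rewrite S1X.
rewrite (sum1E i) ?dltxx ?mul1r // => k h; by rewrite dlt_ne 1?eq_sym // mul0r.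
Qed.

Lemma contract1 (M : I -> I -> I -> I -> R) a2 b2 k l :
  (forall a3 b3, \sum_p \sum_q M a2 q p b2 * X p a3 q b3 = dl a2 b2 * dl a3 b3) ->
  M a2 k l b2 = dl a2 b2 * C k l.
Proof.
move=> hM.
transitivity (\sum_p \sum_q M a2 q p b2 * (dl p l * dl k q)).
  symmetry; rewrite (sum1E l) => [|p h]; last first.
    by apply: big1 => q _; rewrite dlt_ne // mul0r mulr0.
  rewrite (sum1E k) => [|q h]; last by rewrite (@dlt_ne k q) 1?eq_sym // !mulr0.
  by rewrite !dltxx !mulr1.
under eq_bigr => p _ do (under eq_bigr => q _ do rewrite -S1X).
transitivity (\sum_a3 \sum_b3 (\sum_p \sum_q M a2 q p b2 * X p a3 q b3) * PsiX b3 k a3 l).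
  pull. sw1. sw0. sw2. sw1. do 4 (apply eq_bigr => ? _). by rewrite /= mulrA.
under eq_bigr => a3 _ do (under eq_bigr => b3 _ do rewrite hM).
rewrite /C /C_of /ptr1 big_distrr; apply eq_bigr => a3 _.
rewrite (sum1E a3) ?dltxx ?mulr1 // => b3 h; by rewrite (@dlt_ne a3 b3) 1?eq_sym // !mulr0 mul0r.
Qed.
Lemma contractD (M : I -> I -> I -> I -> R) a2 b2 i j :
  (forall a1 b1, \sum_w \sum_u2 M a2 w u2 b2 * X a1 w b1 u2 = dl a1 b1 * dl a2 b2) ->
  M a2 j i b2 = dl a2 b2 * D i j.
Proof.
move=> hM.
transitivity (\sum_w \sum_u2 M a2 w u2 b2 * (dl i u2 * dl w j)).
  symmetry; rewrite (sum1E j) => [|w h]; last first.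
    by apply: big1 => u _; rewrite (@dlt_ne w j) // !mulr0.
  rewrite (sum1E i) => [|u h]; last by rewrite (@dlt_ne i u) 1?eq_sym // mul0r mulr0.
  by rewrite !dltxx !mulr1.
under eq_bigr => w _ do (under eq_bigr => u2 _ do rewrite -S2X).
transitivity (\sum_b \sum_c PsiX i b j c * (\sum_w \sum_u2 M a2 w u2 b2 * X c w b u2)).
  pull. sw1. sw0. sw2. sw1. do 4 (apply eq_bigr => ? _). rewrite /=. ring.
under eq_bigr => b _ do (under eq_bigr => c _ do rewrite hM).
rewrite /D /D_of /ptr2 mulrC big_distrl; apply eq_bigr => b _.
rewrite (sum1E b) ?dltxx ?mul1r // => c h; by rewrite (@dlt_ne c b) // mul0r mulr0.
Qed.

Section GF.
Variables (F G : op2).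
Hypothesis Hc : mul3 (mul3 (lift12 F) (lift23 X)) (lift12 G) = mul3 (mul3 (lift23 G) (lift12 X)) (lift23 F).
Hypothesis IGF : forall a b c d, \sum_p \sum_q G a b p q * F p q c d = dl a c * dl b d.
Hypothesis IFG : forall a b c d, \sum_p \sum_q F a b p q * G p q c d = dl a c * dl b d.

Lemma Est1 a2 a3 b2 b3 :
  \sum_p \sum_q (\sum_t \sum_x \sum_y C t x * F x a2 y p * G y q t b2) * X p a3 q b3
  = dl a2 b2 * dl a3 b3.
Proof.
transitivity (\sum_t \sum_x C t x * mul3 (mul3 (lift12 F) (lift23 X)) (lift12 G) x a2 a3 t b2 b3).
  setoid_rewrite E12r; setoid_rewrite E1223. symmetry. pull.
  sw3. sw2. sw1. sw0. sw3. sw2. sw1.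
  do 5 (apply eq_bigr => ? _). rewrite /=. ring.
rewrite Hc. setoid_rewrite E23r; setoid_rewrite E2312.
rewrite -IGF.
transitivity (\sum_p \sum_q \sum_u2 G a2 a3 p q * F u2 q b2 b3 * (\sum_t \sum_x C t x * X x p t u2)); last first.
  apply eq_bigr => p _; apply eq_bigr => q _.
  under eq_bigr => u2 _ do rewrite CXl.
  rewrite (sum1E p) ?dltxx ?mulr1 // => u h; by rewrite dlt_ne 1?eq_sym // mulr0.
pull. sw3. sw2. sw1. sw0. sw3. sw2. sw1. sw3. sw2.
do 5 (apply eq_bigr => ? _). rewrite /=. ring.
Qed.

Lemma KC a2 k l b2 :
  \sum_t \sum_x \sum_y C t x * F x a2 y l * G y k t b2 = dl a2 b2 * C k l.
Proof.
exact: (@contract1 (fun a2 q p b2 => \sum_t \sum_x \sum_y C t x * F x a2 y p * G y q t b2) a2 b2 k l (@Est1 a2 ^~ b2)).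
Qed.
Lemma EstD a1 a2 b1 b2 :
  \sum_w \sum_u2 (\sum_t \sum_s \sum_u3 G a2 t w u3 * F u2 u3 b2 s * D s t) * X a1 w b1 u2
  = dl a1 b1 * dl a2 b2.
Proof.
transitivity (\sum_t \sum_s mul3 (mul3 (lift23 G) (lift12 X)) (lift23 F) a1 a2 t b1 b2 s * D s t).
  setoid_rewrite E23r; setoid_rewrite E2312. symmetry. pull.
  sw3. sw2. sw1. sw0. sw2. sw1.
  do 5 (apply eq_bigr => ? _). rewrite /=. ring.
rewrite -Hc. setoid_rewrite E12r; setoid_rewrite E1223.
rewrite -IFG.
transitivity (\sum_y \sum_q \sum_p F a1 a2 y p * G y q b1 b2 * (\sum_t \sum_s X p t q s * D s t)); last first.
  apply eq_bigr => y _; apply eq_bigr => q _.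
  under eq_bigr => p _ do rewrite DXl.
  rewrite (sum1E q) ?dltxx ?mulr1 // => p h; by rewrite dlt_ne // mulr0.
pull. sw1. sw0. sw2. sw1. sw3. sw2.
do 5 (apply eq_bigr => ? _). rewrite /=. ring.
Qed.

Lemma KD a2 j i b2 :
  \sum_t \sum_s \sum_u3 G a2 t j u3 * F i u3 b2 s * D s t = dl a2 b2 * D i j.
Proof.
exact: (@contractD (fun a2 w u2 b2 => \sum_t \sum_s \sum_u3 G a2 t w u3 * F u2 u3 b2 s * D s t) a2 b2 i j (fun a1 b1 => @EstD a1 a2 b1 b2)).
Qed.
End GF.
End G.

Definition circ (A B : op2) : op2 := fun i k j l => \sum_b \sum_c A i b j c * B c k b l.

Lemma sum22 (f : I -> I -> I -> I -> R) :
  \sum_a \sum_b \sum_c \sum_d f a b c d = \sum_c \sum_d \sum_a \sum_b f a b c d.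
Proof. sw1. sw0. sw2. sw1. done. Qed.

Lemma circA (A B Cc : op2) : circ (circ A B) Cc = circ A (circ B Cc).
Proof.
do 4 apply functional_extensionality => ?.
rewrite /circ. pull. rewrite sum22. do 4 (apply eq_bigr => ? _). by rewrite /= mulrA.
Qed.
Lemma circ_flipr (A : op2) : circ A (@flip2 R N) = A.
Proof.
apply functional_extensionality => i; apply functional_extensionality => k.
apply functional_extensionality => j; apply functional_extensionality => l.
rewrite /circ /flip2 (sum1E k) => [|b h]; last first.
  by apply: big1 => c _; rewrite (@dlt_ne k b) 1?eq_sym //; rg.
rewrite (sum1E l) => [|c h]; last by rewrite (@dlt_ne c l) //; rg.
by rewrite !dltxx !mulr1.
Qed.
Lemma circ_flipl (A : op2) : circ (@flip2 R N) A = A.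
Proof.
apply functional_extensionality => i; apply functional_extensionality => k.
apply functional_extensionality => j; apply functional_extensionality => l.
rewrite /circ /flip2 (sum1E j) => [|b h]; last first.
  by apply: big1 => c _; rewrite (@dlt_ne b j) //; rg.
rewrite (sum1E i) => [|c h]; last by rewrite (@dlt_ne i c) 1?eq_sym //; rg.
by rewrite !dltxx !mul1r.
Qed.
Lemma cancel_r (F P A B : op2) : circ F P = @flip2 R N -> circ A F = circ B F -> A = B.
Proof.
move=> hP h; by rewrite -(circ_flipr A) -(circ_flipr B) -hP -!circA h.
Qed.
Lemma cancel_l (F P A B : op2) : circ P F = @flip2 R N -> circ F A = circ F B -> A = B.
Proof.
move=> hP h; by rewrite -(circ_flipl A) -(circ_flipl B) -hP !circA h.
Qed.
Lemma op21E (A : op2) a1 a2 b1 b2 : op21 A a1 a2 b1 b2 = A a2 a1 b2 b1.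
Proof.
rewrite /op21 /mul2 /flip2.
rewrite (sum1E b2) => [|x h]; last first.
  by apply: big1 => y _; rewrite (@dlt_ne x b2) //; rg.
rewrite (sum1E b1) => [|y h]; last by rewrite (@dlt_ne y b1) //; rg.
rewrite !dltxx !mulr1.
rewrite (sum1E a2) => [|z h]; last first.
  by apply: big1 => w _; rewrite (@dlt_ne a2 z) 1?eq_sym //; rg.
rewrite (sum1E a1) => [|w h]; last by rewrite (@dlt_ne a1 w) 1?eq_sym //; rg.
by rewrite !dltxx !mul1r.
Qed.

Section Fin.
Variables (X F PsiX PsiF Finv : op2).
Hypothesis S1X : forall i k j l, \sum_b \sum_c X i b j c * PsiX c k b l = dl i l * dl k j.
Hypothesis S2X : forall i k j l, \sum_b \sum_c PsiX i b j c * X c k b l = dl i l * dl k j.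
Hypothesis S1F : forall i k j l, \sum_b \sum_c F i b j c * PsiF c k b l = dl i l * dl k j.
Hypothesis S2F : forall i k j l, \sum_b \sum_c PsiF i b j c * F c k b l = dl i l * dl k j.
Hypothesis IFF : forall a b c d, \sum_p \sum_q F a b p q * Finv p q c d = dl a c * dl b d.
Hypothesis IFiF : forall a b c d, \sum_p \sum_q Finv a b p q * F p q c d = dl a c * dl b d.
Hypothesis H1 : mul3 (mul3 (lift12 F) (lift23 X)) (lift12 Finv) = mul3 (mul3 (lift23 Finv) (lift12 X)) (lift23 F).
Hypothesis H2 : mul3 (mul3 (lift12 Finv) (lift23 X)) (lift12 F) = mul3 (mul3 (lift23 F) (lift12 X)) (lift23 Finv).
Let C := C_of PsiX.
Let D := D_of PsiX.

Lemma cFP : circ F PsiF = @flip2 R N.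
Proof. do 4 apply functional_extensionality => ?; exact: S1F. Qed.
Lemma cPF : circ PsiF F = @flip2 R N.
Proof. do 4 apply functional_extensionality => ?; exact: S2F. Qed.

Lemma G1 : mul2 (lift1 C) PsiF = mul2 (op21 Finv) (lift2 C).
Proof.
apply: (cancel_r cFP).
apply functional_extensionality => i; apply functional_extensionality => k.
apply functional_extensionality => j; apply functional_extensionality => l.
transitivity (C i l * dl k j).
  rewrite /circ /mul2 /lift1.
  transitivity (\sum_b \sum_c (\sum_x C i x * PsiF x b j c) * F c k b l).
    apply eq_bigr => b _; apply eq_bigr => c _; congr (_ * _); apply eq_bigr => x _.
    rewrite (sum1E b) ?dltxx ?mulr1 // => y h; rewrite (@dlt_ne b y) 1?eq_sym //; rg.
  transitivity (\sum_x C i x * (\sum_b \sum_c PsiF x b j c * F c k b l)).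
    pull. sw1. sw0. do 3 (apply eq_bigr => ? _); rewrite /=; ring.
  under eq_bigr => x _ do rewrite S2F.
  rewrite (sum1E l) ?dltxx ?mul1r // => x h; rewrite (@dlt_ne x l) //; rg.
symmetry. rewrite /circ /mul2 /lift2. setoid_rewrite op21E.
transitivity (\sum_y \sum_c \sum_b C y c * F c k b l * Finv b i y j); last first.
  by rewrite (KC S1X S2X H1 IFiF) mulrC.
transitivity (\sum_b \sum_c \sum_y Finv b i y j * C y c * F c k b l).
  apply eq_bigr => b _; apply eq_bigr => c _. rewrite big_distrl.
  rewrite (sum1E j) => [|x h]; last first.
    by rewrite big_distrl; apply: big1 => y _; rewrite (@dlt_ne x j) //; rg.
  rewrite big_distrl; apply eq_bigr => y _; rewrite dltxx /=; ring.
sw1. sw0. sw1. do 3 (apply eq_bigr => ? _); rewrite /=; ring.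
Qed.
Lemma G2 : mul2 PsiF (lift1 C) = mul2 (lift2 C) (op21 Finv).
Proof.
apply: (cancel_r cFP).
apply functional_extensionality => i; apply functional_extensionality => k.
apply functional_extensionality => j; apply functional_extensionality => l.
transitivity (dl i l * C k j).
  rewrite /circ /mul2 /lift1.
  transitivity (\sum_b \sum_c (\sum_x PsiF i b x c * C x j) * F c k b l).
    apply eq_bigr => b _; apply eq_bigr => c _; congr (_ * _); apply eq_bigr => x _.
    rewrite (sum1E c) ?dltxx ?mulr1 // => y h; rewrite (@dlt_ne y c) //; rg.
  transitivity (\sum_x C x j * (\sum_b \sum_c PsiF i b x c * F c k b l)).
    pull. sw1. sw0. do 3 (apply eq_bigr => ? _); rg.
  under eq_bigr => x _ do rewrite S2F.
  rewrite (sum1E k) ?dltxx => [|x h]; last by rewrite (@dlt_ne k x) 1?eq_sym //; rg.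
  rg.
symmetry. rewrite /circ /mul2 /lift2. setoid_rewrite op21E.
transitivity (\sum_b \sum_y \sum_c C b y * Finv y i c j * F c k b l); last first.
  by rewrite (KC S1X S2X H2 IFF).
transitivity (\sum_b \sum_c \sum_y C b y * Finv y i c j * F c k b l); last by sw1.
apply eq_bigr => b _; apply eq_bigr => c _. rewrite big_distrl.
rewrite (sum1E i) => [|x h]; last first.
  by rewrite big_distrl; apply: big1 => y _; rewrite (@dlt_ne i x) 1?eq_sym //; rg.
rewrite big_distrl; apply eq_bigr => y _; rewrite dltxx /=; ring.
Qed.

Lemma G3 : mul2 PsiF (lift2 D) = mul2 (lift1 D) (op21 Finv).
Proof.
apply: (cancel_l cPF).
apply functional_extensionality => i; apply functional_extensionality => k.
apply functional_extensionality => j; apply functional_extensionality => l.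
transitivity (dl k j * D i l).
  rewrite /circ /mul2 /lift2.
  transitivity (\sum_b \sum_c F i b j c * (\sum_y PsiF c k b y * D y l)).
    apply eq_bigr => b _; apply eq_bigr => c _; congr (_ * _).
    rewrite (sum1E b) => [|x h]; last by apply: big1 => y _; rewrite (@dlt_ne x b) //; rg.
    apply eq_bigr => y _; rewrite dltxx; rg.
  transitivity (\sum_y (\sum_b \sum_c F i b j c * PsiF c k b y) * D y l).
    pull. sw1. sw0. do 3 (apply eq_bigr => ? _); rg.
  under eq_bigr => y _ do rewrite S1F.
  rewrite (sum1E i) ?dltxx => [|y h]; last by rewrite (@dlt_ne i y) 1?eq_sym //; rg.
  rg.
symmetry. rewrite /circ /mul2 /lift1. setoid_rewrite op21E.
transitivity (\sum_x \sum_c \sum_b Finv k x l b * F i b j c * D c x); last first.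
  by rewrite (KD S1X S2X H1 IFF).
transitivity (\sum_b \sum_c \sum_x F i b j c * (D c x * Finv k x l b)); last first.
  sw1. sw0. sw1. do 3 (apply eq_bigr => ? _); rg.
apply eq_bigr => b _; apply eq_bigr => c _. rewrite big_distrr; apply eq_bigr => x _; congr (_ * _).
rewrite (sum1E k) => [|y h]; last by rewrite (@dlt_ne k y) 1?eq_sym //; rg.
rewrite dltxx; rg.
Qed.

Lemma G4 : mul2 (lift2 D) PsiF = mul2 (op21 Finv) (lift1 D).
Proof.
apply: (cancel_l cPF).
apply functional_extensionality => i; apply functional_extensionality => k.
apply functional_extensionality => j; apply functional_extensionality => l.
transitivity (dl i l * D k j).
  rewrite /circ /mul2 /lift2.
  transitivity (\sum_b \sum_c F i b j c * (\sum_y D k y * PsiF c y b l)).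
    apply eq_bigr => b _; apply eq_bigr => c _; congr (_ * _).
    rewrite (sum1E c) => [|x h]; last by apply: big1 => y _; rewrite (@dlt_ne c x) 1?eq_sym //; rg.
    apply eq_bigr => y _; rewrite dltxx; rg.
  transitivity (\sum_y D k y * (\sum_b \sum_c F i b j c * PsiF c y b l)).
    pull. sw1. sw0. do 3 (apply eq_bigr => ? _); rg.
  under eq_bigr => y _ do rewrite S1F.
  rewrite (sum1E j) ?dltxx => [|y h]; last by rewrite (@dlt_ne y j) //; rg.
  rg.
symmetry. rewrite /circ /mul2 /lift1. setoid_rewrite op21E.
transitivity (\sum_b \sum_x \sum_c F i b j c * Finv k c l x * D x b); last first.
  by rewrite (KD S1X S2X H2 IFiF).
transitivity (\sum_b \sum_c \sum_x F i b j c * (Finv k c l x * D x b)); last first.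
  sw1. do 3 (apply eq_bigr => ? _); rg.
apply eq_bigr => b _; apply eq_bigr => c _. rewrite big_distrr; apply eq_bigr => x _; congr (_ * _).
rewrite (sum1E l) => [|y h]; last by rewrite (@dlt_ne y l) //; rg.
rewrite dltxx; rg.
Qed.
End Fin.
Lemma skewP (A P : op2) : skew_inverse A P ->
  (forall i k j l, \sum_b \sum_c A i b j c * P c k b l = dl i l * dl k j) /\
  (forall i k j l, \sum_b \sum_c P i b j c * A c k b l = dl i l * dl k j).
Proof.
case=> h1 h2; split => i k j l; [move: (h1 i k j l) | move: (h2 i k j l)];
  rewrite /ptr2_3; setoid_rewrite E1223; exact id.
Qed.
Lemma ext2 (A B : op2) : eqop2 A B -> A = B.
Proof. move=> h; do 4 apply functional_extensionality => ?; exact: h. Qed.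
Lemma ext3 (A B : op3) : eqop3 A B -> A = B.
Proof. move=> h; do 6 apply functional_extensionality => ?; exact: h. Qed.
End S.

Unset Implicit Arguments.

Theorem lemma3p3 (R : fieldType) (N : nat) (X F PsiX PsiF Finv : op2 R N) :
  skew_inverse X PsiX -> skew_inverse F PsiF -> compatible X F ->
  inverse2 F Finv ->
  let CX := C_of PsiX in
  let DX := D_of PsiX in
  let Finv21 := op21 Finv in
  [/\ eqop2 (mul2 (lift1 CX) PsiF) (mul2 Finv21 (lift2 CX)),
      eqop2 (mul2 PsiF (lift1 CX)) (mul2 (lift2 CX) Finv21),
      eqop2 (mul2 PsiF (lift2 DX)) (mul2 (lift1 DX) Finv21) &
      eqop2 (mul2 (lift2 DX) PsiF) (mul2 Finv21 (lift1 DX))].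
Proof.
move=> sX sF [c1 c2] [i1 i2] CX DX Finv21.
have [S1X S2X] := skewP sX.
have [S1F S2F] := skewP sF.
have IFF : forall a b c d, \sum_p \sum_q F a b p q * Finv p q c d = dlt R a c * dlt R b d
  := fun a b c d => i1 a b c d.
have IFiF : forall a b c d, \sum_p \sum_q Finv a b p q * F p q c d = dlt R a c * dlt R b d
  := fun a b c d => i2 a b c d.
have e1 := ext2 i1. have e2 := ext2 i2.
have H1 : mul3 (mul3 (lift12 F) (lift23 X)) (lift12 Finv) = mul3 (mul3 (lift23 Finv) (lift12 X)) (lift23 F).
  apply: conj1; last exact: ext3 c1.
    by rewrite lift12M e1.
  by rewrite lift23M e2 lift23_id.
have H2 : mul3 (mul3 (lift12 Finv) (lift23 X)) (lift12 F) = mul3 (mul3 (lift23 F) (lift12 X)) (lift23 Finv).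
  apply: conj2; last exact: ext3 c2.
    by rewrite lift12M e2.
  by rewrite lift23M e1 lift23_id.
rewrite /CX /DX /Finv21.
split; move=> a b c d.
- by rewrite (G1 S1X S2X S1F S2F IFiF H1).
- by rewrite (G2 S1X S2X S1F S2F IFF H2).
- by rewrite (G3 S1X S2X S1F S2F IFF H1).
- by rewrite (G4 S1X S2X S1F S2F IFiF H2).
Qed.
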